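(* Let $g$ be the pp-wave metric $ds^2=H(u,x^1,x^2)\,du^2+2\,du\,dv+(dx^1)^2+(dx^2)^2$ and let $Y$ be a conformal Killing vector field of $g$, $\mathcal L_Yg=2\omega g$, of the form: there exist smooth functions $a(u),a_1(u),a_2(u),\bar b(u)$ and a constant $\mu$ with $$\omega=\bar b(u)+x^ia_i'(u)-\mu v,\qquad Y^u=\tfrac{\mu}{2}\delta_{ij}x^ix^j+a_i(u)x^i+a(u),$$ $$[\mu x^i+a_i(u)]\,\partial_iH=2\mu H+2a_i''(u)x^i-2a''(u)+4\bar b'(u).$$ For a real constant $c$ define the vector field $f$ by $f^u=0$, $$f^v=\tfrac{u}{2}\left(x^ia_i'(u)-a'(u)+2\bar b(u)-2\mu v\right)+\tfrac12x^ia_i(u)+\tfrac{\mu}{4}\delta_{ij}x^ix^j+\tfrac12a(u)-c\,\tfrac{\mu}{4}u^2,\qquad f^i=-\tfrac{u}{2}\left(\mu x^i+a_i(u)\right),$$ and set $\Upsilon=Y+c\,f$. Then $$\mathcal L_\Upsilon g_{\mu\nu}=2\Omega\left(g_{\mu\nu}+c\,K_{\mu\nu}\right),\qquad \Omega=\omega-\tfrac{c}{2}\mu u,\quad K=du\otimes du .$$ Consequently, for the geodesic Lagrangian $L=\frac{1}{2n}\left(H\dot u^2+2\dot u\dot v+(\dot x^1)^2+(\dot x^2)^2\right)-\frac{m^2}{2}n$, along any solution of its Euler–Lagrange equations on which the (always conserved) momentum $p_v=\dot u/n$ takes a constant value $\pi_v\neq0$, the quantity $I=\Upsilon^\mu p_\mu$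 with $c=m^2/\pi_v^2$ is constant.
   Context: Coordinates $(u,v,x^1,x^2)$, indices $i,j=1,2$ are summed with $\delta_{ij}$, $\partial_i=\partial/\partial x^i$, and primes denote $d/du$. $n(\lambda)>0$ is the einbein, dots are $d/d\lambda$, and $p_\mu=\partial L/\partial\dot{\mathrm x}^\mu$. $K=du\otimes du$ equals $\ell\otimes\ell$ with indices lowered, where $\ell=\partial_v$ is the covariantly constant null Killing vector of the pp-wave; thus $K^{\mu\nu}p_\mu p_\nu=p_v^2$. *)

(* Defs.v *)
From Stdlib Require Import Reals.
From Coquelicot Require Import Coquelicot.
Open Scope R_scope.

(* Points of spacetime, coordinates (u, v, x1, x2); index 0 = u, 1 = v, 2 = x1, 3 = x2. *)
Definition pt : Type := (R * R * R * R)%type.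

Definition crd (p : pt) (i : nat) : R :=
  match p with (u, v, x1, x2) =>
    match i with 0%nat => u | 1%nat => v | 2%nat => x1 | _ => x2 end end.

Definition upd (p : pt) (i : nat) (t : R) : pt :=
  match p with (u, v, x1, x2) =>
    match i with
    | 0%nat => (t, v, x1, x2) | 1%nat => (u, t, x1, x2)
    | 2%nat => (u, v, t, x2) | _ => (u, v, x1, t) end end.

Definition pd (i : nat) (F : pt -> R) : pt -> R :=
  fun p => Derive (fun t => F (upd p i t)) (crd p i).

Fixpoint iterpd (l : list nat) (F : pt -> R) : pt -> R :=
  match l with nil => F | cons i l' => pd i (iterpd l' F) end.

Definition smooth4 (F : pt -> R) : Prop :=
  forall l : list nat,
    (forall p, continuous (iterpd l F) p) /\
    (forall (i : nat) (p : pt), (i < 4)%nat ->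
       ex_derive (fun t => iterpd l F (upd p i t)) (crd p i)).

Definition smooth1 (f : R -> R) : Prop := forall (k : nat) (x : R), ex_derive_n f k x.

Definition sum4 (F : nat -> R) : R := sum_f_R0 F 3.

(* vector fields (components Y^mu) and symmetric 2-tensors (components T_{mu nu}) *)
Definition VF : Type := nat -> pt -> R.
Definition T2 : Type := nat -> nat -> pt -> R.

Definition ppg (H : R -> R -> R -> R) : T2 :=
  fun mu nu p =>
    match mu, nu with
    | 0%nat, 0%nat => H (crd p 0) (crd p 2) (crd p 3)
    | 0%nat, 1%nat | 1%nat, 0%nat => 1
    | 2%nat, 2%nat | 3%nat, 3%nat => 1
    | _, _ => 0 end.

Definition Kdu : T2 :=
  fun mu nu _ => match mu, nu with 0%nat, 0%nat => 1 | _, _ => 0 end.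

Definition Lie (X : VF) (g : T2) : T2 :=
  fun mu nu p =>
    sum4 (fun r => X r p * pd r (g mu nu) p
                   + g r nu p * pd mu (X r) p
                   + g mu r p * pd nu (X r) p).

Definition fvf (a a1 a2 bb : R -> R) (mu c : R) : VF :=
  fun i p =>
    let u := crd p 0 in let v := crd p 1 in
    let x1 := crd p 2 in let x2 := crd p 3 in
    match i with
    | 0%nat => 0
    | 1%nat =>
        u / 2 * (x1 * Derive a1 u + x2 * Derive a2 u - Derive a u + 2 * bb u - 2 * mu * v)
        + 1 / 2 * (x1 * a1 u + x2 * a2 u) + mu / 4 * (x1 ^ 2 + x2 ^ 2)
        + 1 / 2 * a u - c * (mu / 4) * u ^ 2
    | 2%nat => - (u / 2) * (mu * x1 + a1 u)
    | _ => - (u / 2) * (mu * x2 + a2 u)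
    end.

Definition Ups (Y : VF) (a a1 a2 bb : R -> R) (mu c : R) : VF :=
  fun i p => Y i p + c * fvf a a1 a2 bb mu c i p.

Definition omg (a1 a2 bb : R -> R) (mu : R) (p : pt) : R :=
  bb (crd p 0) + crd p 2 * Derive a1 (crd p 0) + crd p 3 * Derive a2 (crd p 0) - mu * crd p 1.

(* geodesic Lagrangian with einbein n; x = position, xd = velocity *)
Definition Lag (H : R -> R -> R -> R) (m : R) (x xd : pt) (n : R) : R :=
  1 / (2 * n) * (H (crd x 0) (crd x 2) (crd x 3) * crd xd 0 ^ 2
                 + 2 * crd xd 0 * crd xd 1 + crd xd 2 ^ 2 + crd xd 3 ^ 2)
  - m ^ 2 / 2 * n.

Definition vel (gam : R -> pt) (l : R) : pt :=
  (Derive (fun s => crd (gam s) 0) l, Derive (fun s => crd (gam s) 1) l,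
   Derive (fun s => crd (gam s) 2) l, Derive (fun s => crd (gam s) 3) l).

Definition mom (H : R -> R -> R -> R) (m : R) (gam : R -> pt) (N : R -> R) (i : nat) (l : R) : R :=
  Derive (fun t => Lag H m (gam l) (upd (vel gam l) i t) (N l)) (crd (vel gam l) i).

Definition dLdx (H : R -> R -> R -> R) (m : R) (gam : R -> pt) (N : R -> R) (i : nat) (l : R) : R :=
  Derive (fun t => Lag H m (upd (gam l) i t) (vel gam l) (N l)) (crd (gam l) i).

Definition dLdn (H : R -> R -> R -> R) (m : R) (gam : R -> pt) (N : R -> R) (l : R) : R :=
  Derive (fun t => Lag H m (gam l) (vel gam l) t) (N l).

(* Euler-Lagrange equations on the open interval (l1, l2); L does not depend on ndot,
   so the n-equation is the constraint dL/dn = 0 *)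
Definition EL_solution (H : R -> R -> R -> R) (m : R) (gam : R -> pt) (N : R -> R)
    (l1 l2 : R) : Prop :=
  forall l, l1 < l < l2 ->
    (forall i, (i < 4)%nat -> is_derive (mom H m gam N i) l (dLdx H m gam N i l))
    /\ dLdn H m gam N l = 0.

(* Main.v *)
Require Import Defs.
From Stdlib Require Import Reals Lra Lia.
From Coquelicot Require Import Coquelicot.
Open Scope R_scope.

Lemma ballR (x e y : R) : ball x e y <-> Rabs (y - x) < e.
Proof. reflexivity. Qed.

Lemma ball4 (a b c d a' b' c' d' e : R) :
  ball ((a,b,c,d) : pt) e ((a',b',c',d') : pt) <->
  Rabs (a'-a) < e /\ Rabs (b'-b) < e /\ Rabs (c'-c) < e /\ Rabs (d'-d) < e.
Proof.
  split.
  - intros [[[H1 H2] H3] H4]. repeat split; assumption.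
  - intros (H1&H2&H3&H4). repeat split; assumption.
Qed.

Lemma crd_upd p i t : crd (upd p i t) i = t.
Proof. destruct p as [[[u v] x] y]; destruct i as [|[|[|i]]]; reflexivity. Qed.
Lemma upd_upd p i s t : upd (upd p i s) i t = upd p i t.
Proof. destruct p as [[[u v] x] y]; destruct i as [|[|[|i]]]; reflexivity. Qed.
Lemma upd_crd p i : upd p i (crd p i) = p.
Proof. destruct p as [[[u v] x] y]; destruct i as [|[|[|i]]]; reflexivity. Qed.

Lemma ball_upd q0 e q i c : ball q0 e q -> Rabs (c - crd q0 i) < e -> ball q0 e (upd q i c).
Proof.
  destruct q0 as [[[u v] x] y]; destruct q as [[[u' v'] x'] y'].
  intros Hb Hc. apply ball4 in Hb.
  destruct i as [|[|[|i]]]; simpl in *; apply ball4; tauto.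
Qed.

Lemma exd_all (F : pt -> R) i : (forall p, ex_derive (fun t => F (upd p i t)) (crd p i)) ->
  forall p x, ex_derive (fun t => F (upd p i t)) x.
Proof.
  intros H p x. specialize (H (upd p i x)). rewrite crd_upd in H.
  eapply ex_derive_ext; [|exact H]. intros t; simpl. now rewrite upd_upd.
Qed.

Lemma pd_at (F : pt -> R) i p x : pd i F (upd p i x) = Derive (fun t => F (upd p i t)) x.
Proof.
  unfold pd. rewrite crd_upd. apply Derive_ext. intros t. now rewrite upd_upd.
Qed.

Lemma deriv_bound (g : R -> R) l D : is_derive g l D ->
  exists d : posreal, forall s, Rabs (s - l) < d -> Rabs (g s - g l) <= (Rabs D + 1) * Rabs (s - l).
Proof.
  intros H. apply is_derive_Reals in H. destruct (H 1 Rlt_0_1) as [d Hd].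
  exists d. intros s Hs.
  destruct (Req_dec s l) as [->|Hne].
  { rewrite !Rminus_diag, Rabs_R0. lra. }
  specialize (Hd (s - l)). replace (l + (s - l)) with s in Hd by ring.
  assert (Hh : s - l <> 0) by lra.
  specialize (Hd Hh Hs).
  assert (E : g s - g l = ((g s - g l)/(s-l) - D) * (s - l) + D * (s - l)) by (field; auto).
  rewrite E.
  eapply Rle_trans; [apply Rabs_triang|]. rewrite !Rabs_mult.
  assert (0 <= Rabs (s - l)) by apply Rabs_pos. nra.
Qed.

Lemma littleo (r : R -> R) l : r l = 0 ->
  (forall eps : posreal, exists d : posreal, forall s, Rabs (s - l) < d -> Rabs (r s) <= eps * Rabs (s - l)) ->
  is_derive r l 0.
Proof.
  intros H0 H. apply is_derive_Reals. intros eps Heps.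
  destruct (H (mkposreal (eps/2) ltac:(lra))) as [d Hd]. exists d.
  intros h Hh Hhd. rewrite H0. specialize (Hd (l + h)).
  replace (l + h - l) with h in Hd by ring. specialize (Hd Hhd). simpl in Hd.
  replace ((r (l + h) - 0) / h - 0) with (r (l+h) / h) by (field; auto).
  unfold Rdiv. rewrite Rabs_mult, Rabs_inv.
  assert (0 < Rabs h) by (apply Rabs_pos_lt; auto).
  apply Rmult_le_compat_r with (r := / Rabs h) in Hd; [|left; apply Rinv_0_lt_compat; auto].
  replace (eps / 2 * Rabs h * / Rabs h) with (eps/2) in Hd by (field; lra). lra.
Qed.

Lemma between_abs a b c : Rmin a b <= c <= Rmax a b -> Rabs (c - a) <= Rabs (b - a).
Proof. unfold Rmin, Rmax; destruct (Rle_dec a b); intros; split_Rabs; lra. Qed.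

Lemma step_deriv (F : pt -> R) i (Q : R -> pt) (g : R -> R) l D :
  (forall p, ex_derive (fun t => F (upd p i t)) (crd p i)) ->
  continuous (pd i F) (Q l) ->
  (forall s, crd (Q s) i = g l) ->
  (forall e : posreal, exists d : posreal, forall s, Rabs (s - l) < d -> ball (Q l) e (Q s)) ->
  is_derive g l D ->
  is_derive (fun s => F (upd (Q s) i (g s)) - F (Q s)) l (pd i F (Q l) * D).
Proof.
  intros Hex Hc HQi HQc Hg.
  set (A := pd i F (Q l)).
  set (r := fun s => (F (upd (Q s) i (g s)) - F (Q s)) - A * (g s - g l)).
  assert (H1 : is_derive (fun s => A * (g s - g l)) l (A * D)).
  { apply is_derive_scal.
    pose proof (is_derive_minus _ _ _ _ _ Hg (is_derive_const (g l) l)) as Hm.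
    replace D with (minus D 0); [exact Hm|]. unfold minus, plus, opp; simpl; ring. }
  assert (H2 : is_derive r l 0).
  { apply littleo.
    - unfold r. rewrite <- (HQi l) at 1. rewrite upd_crd. ring.
    - intros eps.
      assert (HD : 0 < Rabs D + 1) by (pose proof (Rabs_pos D); lra).
      unfold continuous in Hc; rewrite filterlim_locally in Hc.
      destruct (Hc (mkposreal (eps / (Rabs D + 1)) ltac:(apply Rdiv_lt_0_compat; [apply cond_pos|lra]))) as [d1 Hd1].
      destruct (HQc d1) as [d2 Hd2].
      destruct (deriv_bound g l D Hg) as [d3 Hd3].
      assert (Hd4 : 0 < d1 / (Rabs D + 1)) by (apply Rdiv_lt_0_compat; [apply cond_pos|lra]).
      exists (mkposreal _ (Rmin_pos _ _ (Rmin_pos _ _ (cond_pos d2) (cond_pos d3)) Hd4)).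
      intros s Hs. simpl in Hs.
      assert (Hs2 : Rabs (s - l) < d2) by (eapply Rlt_le_trans; [exact Hs|]; eapply Rle_trans; [apply Rmin_l|apply Rmin_l]).
      assert (Hs3 : Rabs (s - l) < d3) by (eapply Rlt_le_trans; [exact Hs|]; eapply Rle_trans; [apply Rmin_l|apply Rmin_r]).
      assert (Hs4 : Rabs (s - l) < d1 / (Rabs D + 1)) by (eapply Rlt_le_trans; [exact Hs|]; apply Rmin_r).
      specialize (Hd3 s Hs3).
      assert (Hgs : Rabs (g s - g l) < d1).
      { eapply Rle_lt_trans; [exact Hd3|].
        apply Rmult_lt_compat_l with (r := Rabs D + 1) in Hs4; [|lra].
        replace ((Rabs D + 1) * (d1 / (Rabs D + 1))) with (pos d1) in Hs4 by (field; lra). lra. }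
      pose (f := fun t => F (upd (Q s) i t)).
      destruct (MVT_gen f (g l) (g s) (Derive f)) as [c [Hcb Hmvt]].
      { intros x _. apply Derive_correct. apply exd_all; auto. }
      { intros x _. apply continuity_pt_filterlim. apply (@ex_derive_continuous R_AbsRing R_NormedModule). apply exd_all; auto. }
      unfold f in Hmvt. assert (E : F (upd (Q s) i (g l)) = F (Q s)) by (rewrite <- (HQi s), upd_crd; reflexivity). rewrite E in Hmvt.
      unfold r. rewrite Hmvt.
      unfold f. rewrite <- pd_at.
      assert (Hball : ball (Q l) d1 (upd (Q s) i c)).
      { apply ball_upd. apply Hd2; auto. rewrite HQi.
        eapply Rle_lt_trans; [apply between_abs; exact Hcb|exact Hgs]. }
      specialize (Hd1 _ Hball). apply (proj1 (ballR _ _ _)) in Hd1. simpl in Hd1. fold A in Hd1.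
      replace (pd i F (upd (Q s) i c) * (g s - g l) - A * (g s - g l))
        with ((pd i F (upd (Q s) i c) - A) * (g s - g l)) by ring.
      rewrite Rabs_mult.
      assert (0 <= Rabs (g s - g l)) by apply Rabs_pos.
      assert (0 <= Rabs (pd i F (upd (Q s) i c) - A)) by apply Rabs_pos.
      apply Rle_trans with (eps / (Rabs D + 1) * ((Rabs D + 1) * Rabs (s - l))).
      + apply Rmult_le_compat; auto; lra.
      + right. field. lra. }
  pose proof (is_derive_plus _ _ _ _ _ H1 H2) as Hp.
  replace (A * D) with (plus (A * D) 0) by (unfold plus; simpl; ring).
  eapply is_derive_ext; [|exact Hp].
  intros s. unfold r, plus; simpl. ring.
Qed.

Lemma dplus (f g : R -> R) x a b : is_derive f x a -> is_derive g x b ->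
  is_derive (fun y => f y + g y) x (a + b).
Proof. intros Ha Hb. exact (is_derive_plus f g x a b Ha Hb). Qed.



Lemma gcont (g : R -> R) l : ex_derive g l ->
  forall e : posreal, exists d : posreal, forall s, Rabs (s - l) < d -> Rabs (g s - g l) < e.
Proof.
  intros [D HD] e. destruct (deriv_bound g l D HD) as [d Hd].
  assert (HD1 : 0 < Rabs D + 1) by (pose proof (Rabs_pos D); lra).
  assert (H2 : 0 < e / (Rabs D + 1)) by (apply Rdiv_lt_0_compat; [apply cond_pos|lra]).
  exists (mkposreal _ (Rmin_pos _ _ (cond_pos d) H2)). intros s Hs. simpl in Hs.
  assert (Hs1 : Rabs (s - l) < d) by (eapply Rlt_le_trans; [exact Hs|apply Rmin_l]).
  assert (Hs2 : Rabs (s - l) < e / (Rabs D + 1)) by (eapply Rlt_le_trans; [exact Hs|apply Rmin_r]).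
  eapply Rle_lt_trans; [apply Hd; exact Hs1|].
  apply Rmult_lt_compat_l with (r := Rabs D + 1) in Hs2; [|lra].
  replace ((Rabs D + 1) * (e / (Rabs D + 1))) with (pos e) in Hs2 by (field; lra). exact Hs2.
Qed.

Lemma pt_eta (p : pt) : p = (crd p 0, crd p 1, crd p 2, crd p 3).
Proof. destruct p as [[[u v] x] y]. reflexivity. Qed.

Lemma chain4 (F : pt -> R) (gam : R -> pt) l :
  (forall i, (i<4)%nat -> forall p, ex_derive (fun t => F (upd p i t)) (crd p i)) ->
  (forall i, (i<4)%nat -> continuous (pd i F) (gam l)) ->
  (forall i, (i<4)%nat -> ex_derive (fun s => crd (gam s) i) l) ->
  is_derive (fun s => F (gam s)) l
    (sum4 (fun i => pd i F (gam l) * Derive (fun s => crd (gam s) i) l)).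
Proof.
  intros Hex Hc Hg.
  set (g0 := fun s => crd (gam s) 0). set (g1 := fun s => crd (gam s) 1).
  set (g2 := fun s => crd (gam s) 2). set (g3 := fun s => crd (gam s) 3).
  assert (Eg : forall s, gam s = (g0 s, g1 s, g2 s, g3 s)) by (intros; apply pt_eta).
  assert (Hall : forall e : posreal, exists d : posreal, forall s, Rabs (s - l) < d ->
     Rabs (g0 s - g0 l) < e /\ Rabs (g1 s - g1 l) < e /\ Rabs (g2 s - g2 l) < e /\ Rabs (g3 s - g3 l) < e).
  { intros e.
    destruct (gcont g0 l (Hg 0%nat ltac:(lia)) e) as [d0 H0].
    destruct (gcont g1 l (Hg 1%nat ltac:(lia)) e) as [d1 H1].
    destruct (gcont g2 l (Hg 2%nat ltac:(lia)) e) as [d2 H2].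
    destruct (gcont g3 l (Hg 3%nat ltac:(lia)) e) as [d3 H3].
    exists (mkposreal _ (Rmin_pos _ _ (Rmin_pos _ _ (cond_pos d0) (cond_pos d1)) (Rmin_pos _ _ (cond_pos d2) (cond_pos d3)))).
    intros s Hs; simpl in Hs.
    repeat split; [apply H0|apply H1|apply H2|apply H3];
    (eapply Rlt_le_trans; [exact Hs|]);
    repeat (apply Rmin_glb_lt || apply Rmin_l || apply Rmin_r || idtac);
    eauto using Rle_trans, Rmin_l, Rmin_r. }
  set (q0 := (g0 l, g1 l, g2 l, g3 l) : pt).
  assert (Eq0 : gam l = q0) by apply Eg.
  assert (Hzero : forall e : posreal, Rabs (g0 l - g0 l) < e /\ Rabs (g1 l - g1 l) < e /\ Rabs (g2 l - g2 l) < e /\ Rabs (g3 l - g3 l) < e).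
  { intros e. rewrite !Rminus_diag, Rabs_R0. pose proof (cond_pos e). repeat split; lra. }
  assert (D0 : is_derive (fun s => F (upd (q0 : pt) 0 (g0 s)) - F q0) l (pd 0 F q0 * Derive g0 l)).
  { apply (step_deriv F 0 (fun _ => q0) g0 l).
    - apply Hex; lia.
    - rewrite <- Eq0. apply Hc; lia.
    - reflexivity.
    - intros e. exists (mkposreal 1 Rlt_0_1). intros s _. apply ball4. apply Hzero.
    - apply Derive_correct, Hg; lia. }
  assert (D1 : is_derive (fun s => F ((g0 s, g1 s, g2 l, g3 l) : pt) - F ((g0 s, g1 l, g2 l, g3 l) : pt)) l (pd 1 F q0 * Derive g1 l)).
  { apply (step_deriv F 1 (fun s => (g0 s, g1 l, g2 l, g3 l)) g1 l).
    - apply Hex; lia.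
    - simpl. fold q0. rewrite <- Eq0. apply Hc; lia.
    - reflexivity.
    - intros e. destruct (Hall e) as [d Hd]. exists d. intros s Hs. apply ball4.
      specialize (Hd s Hs). pose proof (Hzero e). tauto.
    - apply Derive_correct, Hg; lia. }
  assert (D2 : is_derive (fun s => F ((g0 s, g1 s, g2 s, g3 l) : pt) - F ((g0 s, g1 s, g2 l, g3 l) : pt)) l (pd 2 F q0 * Derive g2 l)).
  { apply (step_deriv F 2 (fun s => (g0 s, g1 s, g2 l, g3 l)) g2 l).
    - apply Hex; lia.
    - simpl. fold q0. rewrite <- Eq0. apply Hc; lia.
    - reflexivity.
    - intros e. destruct (Hall e) as [d Hd]. exists d. intros s Hs. apply ball4.
      specialize (Hd s Hs). pose proof (Hzero e). tauto.
    - apply Derive_correct, Hg; lia. }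
  assert (D3 : is_derive (fun s => F ((g0 s, g1 s, g2 s, g3 s) : pt) - F ((g0 s, g1 s, g2 s, g3 l) : pt)) l (pd 3 F q0 * Derive g3 l)).
  { apply (step_deriv F 3 (fun s => (g0 s, g1 s, g2 s, g3 l)) g3 l).
    - apply Hex; lia.
    - simpl. fold q0. rewrite <- Eq0. apply Hc; lia.
    - reflexivity.
    - intros e. destruct (Hall e) as [d Hd]. exists d. intros s Hs. apply ball4.
      specialize (Hd s Hs). pose proof (Hzero e). tauto.
    - apply Derive_correct, Hg; lia. }
  pose proof (dplus _ _ _ _ _ (dplus _ _ _ _ _ (dplus _ _ _ _ _ D0 D1) D2) D3) as DS.
  pose proof (dplus _ _ _ _ _ DS (is_derive_const (F q0) l)) as DT.
  rewrite Eq0. unfold sum4; simpl.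
  change (@zero R_AbsRing) with 0 in DT. rewrite Rplus_0_r in DT.
  eapply is_derive_ext; [|exact DT].
  intros s. simpl. rewrite (Eg s). ring.
Qed.

Ltac dcomp1 :=
  match goal with
  | |- context [Derive ?f ?x] =>
    lazymatch f with
    | (fun _ => _) =>
      let L := fresh "L" in let HD := fresh "HD" in
      evar (L : R);
      assert (HD : is_derive f x L) by (unfold L; auto_derive; [repeat split; auto | reflexivity]);
      rewrite (is_derive_unique _ _ _ HD); unfold L; clear L HD
    end
  end.

Lemma Lie_f (H : R -> R -> R -> R) (a a1 a2 bb : R -> R) mu c
  (Ha : forall x, ex_derive a x) (Ha' : forall x, ex_derive (Derive a) x)
  (Ha1 : forall x, ex_derive a1 x) (Ha1' : forall x, ex_derive (Derive a1) x)
  (Ha2 : forall x, ex_derive a2 x) (Ha2' : forall x, ex_derive (Derive a2) x)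
  (Hb : forall x, ex_derive bb x)
  (HPDE : forall u x1 x2 : R,
     (mu * x1 + a1 u) * Derive (fun t => H u t x2) x1
     + (mu * x2 + a2 u) * Derive (fun t => H u x1 t) x2
     = 2 * mu * H u x1 x2
       + 2 * (Derive_n a1 2 u * x1 + Derive_n a2 2 u * x2)
       - 2 * Derive_n a 2 u + 4 * Derive bb u)
  i j p : (i < 4)%nat -> (j < 4)%nat ->
  Lie (fvf a a1 a2 bb mu c) (ppg H) i j p =
  2 * omg a1 a2 bb mu p * Kdu i j p - mu * crd p 0 * ppg H i j p - c * mu * crd p 0 * Kdu i j p.
Proof.
  intros Hi Hj. destruct p as [[[u v] x1] x2].
  pose proof (HPDE u x1 x2) as HP.
  change (Derive_n a1 2 u) with (Derive (Derive a1) u) in HP.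
  change (Derive_n a2 2 u) with (Derive (Derive a2) u) in HP.
  change (Derive_n a 2 u) with (Derive (Derive a) u) in HP.
  pose proof (f_equal (fun z => u/2*z) HP) as HP2; simpl in HP2.
  destruct i as [|[|[|[|i]]]]; try lia; destruct j as [|[|[|[|j]]]]; try lia;
  unfold Lie, sum4, omg, Kdu; simpl; unfold pd; simpl;
  try set (h0 := Derive (fun t => H t x1 x2) u) in *;
  try set (h2 := Derive (fun t => H u t x2) x1) in *;
  try set (h3 := Derive (fun t => H u x1 t) x2) in *;
  repeat (dcomp1;
  repeat change (fun x : R => a1 x) with a1;
  repeat change (fun x : R => a2 x) with a2;
  repeat change (fun x : R => a x) with a;
  repeat change (fun x : R => bb x) with bb;
  repeat change (fun x : R => Derive a1 x) with (Derive a1);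
  repeat change (fun x : R => Derive a2 x) with (Derive a2);
  repeat change (fun x : R => Derive a x) with (Derive a)).
  all: lra.
Qed.

Lemma pd_lin (X1 X2 : pt -> R) c k p :
  ex_derive (fun t => X1 (upd p k t)) (crd p k) ->
  ex_derive (fun t => X2 (upd p k t)) (crd p k) ->
  pd k (fun q => X1 q + c * X2 q) p = pd k X1 p + c * pd k X2 p.
Proof.
  intros H1 H2. unfold pd.
  rewrite Derive_plus; auto. rewrite Derive_scal. reflexivity.
  apply ex_derive_scal. auto.
Qed.

Lemma Lie_lin (X1 X2 : VF) (g : T2) c i j p :
  (forall r k, (r<4)%nat -> (k<4)%nat -> ex_derive (fun t => X1 r (upd p k t)) (crd p k)) ->
  (forall r k, (r<4)%nat -> (k<4)%nat -> ex_derive (fun t => X2 r (upd p k t)) (crd p k)) ->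
  (i<4)%nat -> (j<4)%nat ->
  Lie (fun r q => X1 r q + c * X2 r q) g i j p = Lie X1 g i j p + c * Lie X2 g i j p.
Proof.
  intros H1 H2 Hi Hj. unfold Lie, sum4; simpl.
  assert (E : forall r k, (r<4)%nat -> (k<4)%nat ->
    pd k (fun q => X1 r q + c * X2 r q) p = pd k (X1 r) p + c * pd k (X2 r) p).
  { intros r k Hr Hk. apply pd_lin; auto. }
  rewrite (E 0%nat i), (E 1%nat i), (E 2%nat i), (E 3%nat i),
    (E 0%nat j), (E 1%nat j), (E 2%nat j), (E 3%nat j) by lia. ring.
Qed.

Lemma fvf_ex (a a1 a2 bb : R -> R) mu c
  (Ha : forall x, ex_derive a x) (Ha' : forall x, ex_derive (Derive a) x)
  (Ha1 : forall x, ex_derive a1 x) (Ha1' : forall x, ex_derive (Derive a1) x)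
  (Ha2 : forall x, ex_derive a2 x) (Ha2' : forall x, ex_derive (Derive a2) x)
  (Hb : forall x, ex_derive bb x) r k p :
  ex_derive (fun t => fvf a a1 a2 bb mu c r (upd p k t)) (crd p k).
Proof.
  destruct p as [[[u v] x1] x2].
  destruct r as [|[|[|[|r]]]]; destruct k as [|[|[|[|k]]]]; simpl;
  auto_derive; repeat split; auto.
Qed.

Lemma pd_const k (c0 : R) p : pd k (fun _ => c0) p = 0.
Proof. unfold pd. apply Derive_const. Qed.

Lemma pd_ppg00 H k p : pd k (ppg H 0%nat 0%nat) p = pd k (fun q => H (crd q 0) (crd q 2) (crd q 3)) p.
Proof. reflexivity. Qed.

Lemma pd_ppg_other H k a b p : (a, b) <> (0%nat, 0%nat) -> pd k (ppg H a b) p = 0.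
Proof.
  intros Hab. unfold pd, ppg.
  destruct a as [|[|[|[|a]]]]; destruct b as [|[|[|[|b]]]]; try congruence; apply Derive_const.
Qed.

Lemma alg (H : R->R->R->R) (Y f : VF) (c n m piv Om : R) (p : pt) (D : nat -> R) :
  n <> 0 -> piv <> 0 ->
  (forall a b, (a<4)%nat -> (b<4)%nat ->
     Lie Y (ppg H) a b p + c * Lie f (ppg H) a b p = 2 * Om * (ppg H a b p + c * Kdu a b p)) ->
  H (crd p 0) (crd p 2) (crd p 3) * D 0%nat ^ 2 + 2 * D 0%nat * D 1%nat + D 2%nat ^ 2 + D 3%nat ^ 2 = - m^2 * n^2 ->
  D 0%nat / n = piv ->
  c = m^2/piv^2 ->
  sum4 (fun r => (sum4 (fun k => pd k (Y r) p * D k) + c * sum4 (fun k => pd k (f r) p * D k))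
        * (match r with 0%nat => (H (crd p 0) (crd p 2) (crd p 3) * D 0%nat + D 1%nat) / n
           | 1%nat => D 0%nat / n | 2%nat => D 2%nat / n | _ => D 3%nat / n end)
      + (Y r p + c * f r p) * (1 / (2 * n) * D 0%nat ^ 2 * pd r (fun q => H (crd q 0) (crd q 2) (crd q 3)) p)) = 0.
Proof.
  intros Hn Hpiv HL HQ Hmom Hc.
  set (S := sum4 _).
  assert (E : 2 * n * S = D 0%nat * D 0%nat * (Lie Y (ppg H) 0%nat 0%nat p + c * Lie f (ppg H) 0%nat 0%nat p) + D 0%nat * D 1%nat * (Lie Y (ppg H) 0%nat 1%nat p + c * Lie f (ppg H) 0%nat 1%nat p) + D 0%nat * D 2%nat * (Lie Y (ppg H) 0%nat 2%nat p + c * Lie f (ppg H) 0%nat 2%nat p) + D 0%nat * D 3%nat * (Lie Y (ppg H) 0%nat 3%nat p + c * Lie f (ppg H) 0%nat 3%nat p) + D 1%nat * D 0%nat * (Lie Y (ppg H) 1%nat 0%nat p + c * Lie f (ppg H) 1%nat 0%nat p) + D 1%nat * D 1%nat * (Lie Y (ppg H) 1%nat 1%nat p + c * Lie f (ppg H) 1%nat 1%nat p) + D 1%nat * D 2%nat * (Lie Y (ppg H) 1%nat 2%nat p + c * Lie f (ppg H) 1%nat 2%nat p) + D 1%nat * D 3%nat * (Lie Y (ppg H) 1%nat 3%nat p + c * Lie f (ppg H) 1%nat 3%nat p) + D 2%nat * D 0%nat * (Lie Y (ppg H) 2%nat 0%nat p + c * Lie f (ppg H) 2%nat 0%nat p)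 + D 2%nat * D 1%nat * (Lie Y (ppg H) 2%nat 1%nat p + c * Lie f (ppg H) 2%nat 1%nat p) + D 2%nat * D 2%nat * (Lie Y (ppg H) 2%nat 2%nat p + c * Lie f (ppg H) 2%nat 2%nat p) + D 2%nat * D 3%nat * (Lie Y (ppg H) 2%nat 3%nat p + c * Lie f (ppg H) 2%nat 3%nat p) + D 3%nat * D 0%nat * (Lie Y (ppg H) 3%nat 0%nat p + c * Lie f (ppg H) 3%nat 0%nat p) + D 3%nat * D 1%nat * (Lie Y (ppg H) 3%nat 1%nat p + c * Lie f (ppg H) 3%nat 1%nat p) + D 3%nat * D 2%nat * (Lie Y (ppg H) 3%nat 2%nat p + c * Lie f (ppg H) 3%nat 2%nat p) + D 3%nat * D 3%nat * (Lie Y (ppg H) 3%nat 3%nat p + c * Lie f (ppg H) 3%nat 3%nat p)).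
  { unfold S, Lie, sum4. simpl. rewrite !pd_ppg00. rewrite !pd_ppg_other by congruence. field. auto. }
  rewrite !HL in E by lia.
  unfold ppg, Kdu in E. simpl in E.
  assert (HD0 : D 0%nat = piv * n) by (rewrite <- Hmom; field; auto).
  assert (E2 : 2 * n * S = 2 * Om * (- m^2 * n^2 + c * D 0%nat ^ 2)) by (rewrite E, <- HQ; simpl; ring).
  rewrite HD0, Hc in E2.
  replace (- m ^ 2 * n ^ 2 + m ^ 2 / piv ^ 2 * (piv * n) ^ 2) with 0 in E2 by (field; auto).
  apply Rmult_eq_reg_l with (2 * n). rewrite E2. ring. apply Rmult_integral_contrapositive_currified; lra.
Qed.

Lemma dmult (f g : R -> R) x a b : is_derive f x a -> is_derive g x b ->
  is_derive (fun y => f y * g y) x (a * g x + f x * b).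
Proof. intros Ha Hb. exact (is_derive_mult f g x a b Ha Hb (fun n m => Rmult_comm n m)). Qed.

Lemma is_derive_val (f : R -> R) x v w : is_derive f x v -> v = w -> is_derive f x w.
Proof. intros H E; subst; exact H. Qed.

Section M.
Variables (H : R -> R -> R -> R) (m : R) (gam : R -> pt) (N : R -> R) (l : R).
Hypothesis Hn : N l <> 0.
Let D k := Derive (fun s => crd (gam s) k) l.
Let Hp := H (crd (gam l) 0) (crd (gam l) 2) (crd (gam l) 3).

Lemma mom0 : mom H m gam N 0%nat l = (Hp * D 0%nat + D 1%nat) / N l.
Proof. unfold mom, Lag, vel, D, Hp; simpl. apply is_derive_unique. auto_derive; [repeat split; auto|]. field. auto. Qed.
Lemma mom1 : mom H m gam N 1%nat l = D 0%nat / N l.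
Proof. unfold mom, Lag, vel, D, Hp; simpl. apply is_derive_unique. auto_derive; [repeat split; auto|]. field. auto. Qed.
Lemma mom2 : mom H m gam N 2%nat l = D 2%nat / N l.
Proof. unfold mom, Lag, vel, D, Hp; simpl. apply is_derive_unique. auto_derive; [repeat split; auto|]. field. auto. Qed.
Lemma mom3 : mom H m gam N 3%nat l = D 3%nat / N l.
Proof. unfold mom, Lag, vel, D, Hp; simpl. apply is_derive_unique. auto_derive; [repeat split; auto|]. field. auto. Qed.

Lemma dLdn_val : dLdn H m gam N l =
  - (Hp * D 0%nat ^ 2 + 2 * D 0%nat * D 1%nat + D 2%nat ^ 2 + D 3%nat ^ 2) / (2 * N l ^ 2) - m ^ 2 / 2.
Proof. unfold dLdn, Lag, vel, D, Hp; simpl. apply is_derive_unique. auto_derive; [repeat split; auto|]. field. auto. Qed.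

Lemma dLdx_val r :
  ex_derive (fun t => H (crd (upd (gam l) r t) 0) (crd (upd (gam l) r t) 2) (crd (upd (gam l) r t) 3)) (crd (gam l) r) ->
  dLdx H m gam N r l = 1 / (2 * N l) * D 0%nat ^ 2 * pd r (fun q => H (crd q 0) (crd q 2) (crd q 3)) (gam l).
Proof.
  intros Hex. unfold dLdx, Lag, pd, D.
  set (G := fun t => H (crd (upd (gam l) r t) 0) (crd (upd (gam l) r t) 2) (crd (upd (gam l) r t) 3)).
  fold G in Hex.
  apply is_derive_unique.
  eapply is_derive_ext.
  { intros t. change (H (crd (upd (gam l) r t) 0) (crd (upd (gam l) r t) 2) (crd (upd (gam l) r t) 3)) with (G t).
    reflexivity. }
  simpl. auto_derive; [repeat split; auto|]. simpl. change (fun x : R => G x) with G. ring.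
Qed.
End M.

Ltac etanorm := repeat match goal with |- context [fun x : R => ?f x] => change (fun x : R => f x) with f end.

Lemma fvf_chain (a a1 a2 bb : R -> R) mu c
  (Ha : forall x, ex_derive a x) (Ha' : forall x, ex_derive (Derive a) x)
  (Ha1 : forall x, ex_derive a1 x) (Ha1' : forall x, ex_derive (Derive a1) x)
  (Ha2 : forall x, ex_derive a2 x) (Ha2' : forall x, ex_derive (Derive a2) x)
  (Hb : forall x, ex_derive bb x) r (g0 g1 g2 g3 : R -> R) l :
  ex_derive g0 l -> ex_derive g1 l -> ex_derive g2 l -> ex_derive g3 l ->
  is_derive (fun s => fvf a a1 a2 bb mu c r (g0 s, g1 s, g2 s, g3 s)) l
    (pd 0 (fvf a a1 a2 bb mu c r) (g0 l, g1 l, g2 l, g3 l) * Derive g0 l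
     + pd 1 (fvf a a1 a2 bb mu c r) (g0 l, g1 l, g2 l, g3 l) * Derive g1 l
     + pd 2 (fvf a a1 a2 bb mu c r) (g0 l, g1 l, g2 l, g3 l) * Derive g2 l
     + pd 3 (fvf a a1 a2 bb mu c r) (g0 l, g1 l, g2 l, g3 l) * Derive g3 l).
Proof.
  intros H0 H1 H2 H3.
  destruct r as [|[|[|r]]]; unfold pd; simpl; repeat (dcomp1; etanorm);
  auto_derive; try (repeat split; auto; fail); etanorm;
  match goal with |- ?a = ?b => change (@eq R a b) end; field.
Qed.

Theorem mainTheorem4
  (H : R -> R -> R -> R) (a a1 a2 bb : R -> R) (mu : R) (Y : VF)
  (HH : smooth4 (fun p => H (crd p 0) (crd p 2) (crd p 3)))
  (Ha : smooth1 a) (Ha1 : smooth1 a1) (Ha2 : smooth1 a2) (Hbb : smooth1 bb)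
  (HY : forall i, (i < 4)%nat -> smooth4 (Y i))
  (HCKV : forall (i j : nat) (p : pt), (i < 4)%nat -> (j < 4)%nat ->
     Lie Y (ppg H) i j p = 2 * omg a1 a2 bb mu p * ppg H i j p)
  (HYu : forall p : pt,
     Y 0%nat p = mu / 2 * (crd p 2 ^ 2 + crd p 3 ^ 2)
                 + a1 (crd p 0) * crd p 2 + a2 (crd p 0) * crd p 3 + a (crd p 0))
  (HPDE : forall u x1 x2 : R,
     (mu * x1 + a1 u) * Derive (fun t => H u t x2) x1
     + (mu * x2 + a2 u) * Derive (fun t => H u x1 t) x2
     = 2 * mu * H u x1 x2
       + 2 * (Derive_n a1 2 u * x1 + Derive_n a2 2 u * x2)
       - 2 * Derive_n a 2 u + 4 * Derive bb u) :
  (forall (c : R) (i j : nat) (p : pt), (i < 4)%nat -> (j < 4)%nat ->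
     Lie (Ups Y a a1 a2 bb mu c) (ppg H) i j p
     = 2 * (omg a1 a2 bb mu p - c / 2 * mu * crd p 0) * (ppg H i j p + c * Kdu i j p))
  /\
  (forall (m : R) (gam : R -> pt) (N : R -> R) (l1 l2 piv : R),
     l1 < l2 ->
     (forall (i k : nat) (l : R), (i < 4)%nat -> l1 < l < l2 ->
        ex_derive_n (fun s => crd (gam s) i) k l) ->
     (forall (k : nat) (l : R), l1 < l < l2 -> ex_derive_n N k l) ->
     (forall l, l1 < l < l2 -> 0 < N l) ->
     EL_solution H m gam N l1 l2 ->
     piv <> 0 ->
     (forall l, l1 < l < l2 -> mom H m gam N 1%nat l = piv) ->
     forall la lb, l1 < la < l2 -> l1 < lb < l2 ->
       sum4 (fun r => Ups Y a a1 a2 bb mu (m ^ 2 / piv ^ 2) r (gam la) * mom H m gam N r la)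
       = sum4 (fun r => Ups Y a a1 a2 bb mu (m ^ 2 / piv ^ 2) r (gam lb) * mom H m gam N r lb)).
Proof.
  assert (Had : forall x, ex_derive a x) by (intro x; exact (Ha 1%nat x)).
  assert (Had' : forall x, ex_derive (Derive a) x) by (intro x; exact (Ha 2%nat x)).
  assert (Ha1d : forall x, ex_derive a1 x) by (intro x; exact (Ha1 1%nat x)).
  assert (Ha1d' : forall x, ex_derive (Derive a1) x) by (intro x; exact (Ha1 2%nat x)).
  assert (Ha2d : forall x, ex_derive a2 x) by (intro x; exact (Ha2 1%nat x)).
  assert (Ha2d' : forall x, ex_derive (Derive a2) x) by (intro x; exact (Ha2 2%nat x)).
  assert (Hbd : forall x, ex_derive bb x) by (intro x; exact (Hbb 1%nat x)).
  assert (HYex : forall r k p, (r<4)%nat -> (k<4)%nat -> ex_derive (fun t => Y r (upd p k t)) (crd p k)).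
  { intros r k p Hr Hk. exact (proj2 (HY r Hr nil) k p Hk). }
  assert (Hfex : forall c r k p, (r<4)%nat -> (k<4)%nat ->
    ex_derive (fun t => fvf a a1 a2 bb mu c r (upd p k t)) (crd p k)).
  { intros c r k p _ _. apply fvf_ex; auto. }
  assert (HLin : forall c i j p, (i<4)%nat -> (j<4)%nat ->
    Lie (Ups Y a a1 a2 bb mu c) (ppg H) i j p = Lie Y (ppg H) i j p + c * Lie (fvf a a1 a2 bb mu c) (ppg H) i j p).
  { intros c i j p Hi Hj. unfold Ups. apply Lie_lin; auto. }
  assert (P1 : forall (c : R) (i j : nat) (p : pt), (i < 4)%nat -> (j < 4)%nat ->
     Lie (Ups Y a a1 a2 bb mu c) (ppg H) i j p
     = 2 * (omg a1 a2 bb mu p - c / 2 * mu * crd p 0) * (ppg H i j p + c * Kdu i j p)).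
  { intros c i j p Hi Hj. rewrite HLin by auto. rewrite HCKV by auto.
    rewrite (Lie_f H a a1 a2 bb mu c) by auto. field. }
  split; [exact P1|].
  intros m gam N l1 l2 piv Hl Hgam HN HNpos HEL Hpiv Hmom la lb Hla Hlb.
  pose (c := m ^ 2 / piv ^ 2).
  pose (I := fun s => sum4 (fun r => Ups Y a a1 a2 bb mu c r (gam s) * mom H m gam N r s)).
  assert (HD : forall l, l1 < l < l2 -> is_derive I l 0).
  { intros l Hl'.
    assert (Hg : forall k, (k<4)%nat -> ex_derive (fun s => crd (gam s) k) l).
    { intros k Hk. exact (Hgam k 1%nat l Hk Hl'). }
    assert (Hn : N l <> 0) by (specialize (HNpos l Hl'); lra).
    assert (HU : forall r, (r<4)%nat -> is_derive (fun s => Ups Y a a1 a2 bb mu c r (gam s)) l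
       (sum4 (fun k => pd k (Y r) (gam l) * Derive (fun s => crd (gam s) k) l)
        + c * sum4 (fun k => pd k (fvf a a1 a2 bb mu c r) (gam l) * Derive (fun s => crd (gam s) k) l))).
    { intros r Hr. unfold Ups. apply dplus.
      - apply chain4.
        + intros i Hi p. apply HYex; auto.
        + intros i Hi. exact (proj1 (HY r Hr (cons i nil)) (gam l)).
        + exact Hg.
      - apply is_derive_scal.
        pose proof (fvf_chain a a1 a2 bb mu c Had Had' Ha1d Ha1d' Ha2d Ha2d' Hbd r
          (fun s => crd (gam s) 0) (fun s => crd (gam s) 1) (fun s => crd (gam s) 2) (fun s => crd (gam s) 3) l
          (Hg 0%nat ltac:(lia)) (Hg 1%nat ltac:(lia)) (Hg 2%nat ltac:(lia)) (Hg 3%nat ltac:(lia))) as Hf.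
        cbv beta in Hf. rewrite <- (pt_eta (gam l)) in Hf.
        eapply is_derive_ext; [|exact Hf].
        intros s. simpl. rewrite <- (pt_eta (gam s)). reflexivity. }
    assert (HM : forall r, (r<4)%nat -> is_derive (mom H m gam N r) l (dLdx H m gam N r l)).
    { intros r Hr. exact (proj1 (HEL l Hl') r Hr). }
    pose proof (dmult _ _ _ _ _ (HU 0%nat ltac:(lia)) (HM 0%nat ltac:(lia))) as T0.
    pose proof (dmult _ _ _ _ _ (HU 1%nat ltac:(lia)) (HM 1%nat ltac:(lia))) as T1.
    pose proof (dmult _ _ _ _ _ (HU 2%nat ltac:(lia)) (HM 2%nat ltac:(lia))) as T2.
    pose proof (dmult _ _ _ _ _ (HU 3%nat ltac:(lia)) (HM 3%nat ltac:(lia))) as T3.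
    pose proof (dplus _ _ _ _ _ (dplus _ _ _ _ _ (dplus _ _ _ _ _ T0 T1) T2) T3) as T.
    apply (is_derive_val _ _ _ _ T).
    rewrite (mom0 H m gam N l Hn), (mom1 H m gam N l Hn), (mom2 H m gam N l Hn), (mom3 H m gam N l Hn).
    rewrite (dLdx_val H m gam N l 0%nat (proj2 (HH nil) 0%nat (gam l) ltac:(lia))).
    rewrite (dLdx_val H m gam N l 1%nat (proj2 (HH nil) 1%nat (gam l) ltac:(lia))).
    rewrite (dLdx_val H m gam N l 2%nat (proj2 (HH nil) 2%nat (gam l) ltac:(lia))).
    rewrite (dLdx_val H m gam N l 3%nat (proj2 (HH nil) 3%nat (gam l) ltac:(lia))).
    assert (HL : forall al be, (al<4)%nat -> (be<4)%nat ->
      Lie Y (ppg H) al be (gam l) + c * Lie (fvf a a1 a2 bb mu c) (ppg H) al be (gam l)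
      = 2 * (omg a1 a2 bb mu (gam l) - c / 2 * mu * crd (gam l) 0) * (ppg H al be (gam l) + c * Kdu al be (gam l))).
    { intros al be Hal Hbe. rewrite <- HLin by auto. apply P1; auto. }
    pose proof (proj2 (HEL l Hl')) as HLn. rewrite (dLdn_val H m gam N l Hn) in HLn.
    set (D := fun k => Derive (fun s => crd (gam s) k) l).
    assert (HQ : H (crd (gam l) 0) (crd (gam l) 2) (crd (gam l) 3) * D 0%nat ^ 2 + 2 * D 0%nat * D 1%nat + D 2%nat ^ 2 + D 3%nat ^ 2 = - m^2 * N l^2).
    { unfold D. apply Rminus_diag_uniq.
      replace (H (crd (gam l) 0) (crd (gam l) 2) (crd (gam l) 3) * Derive (fun s => crd (gam s) 0) l ^ 2 + 2 * Derive (fun s => crd (gam s) 0) l * Derive (fun s => crd (gam s) 1) l + Derive (fun s => crd (gam s) 2) l ^ 2 + Derive (fun s => crd (gam s) 3) l ^ 2 - - m ^ 2 * N l ^ 2)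
      with (- (2 * N l ^ 2) * (- (H (crd (gam l) 0) (crd (gam l) 2) (crd (gam l) 3) * Derive (fun s => crd (gam s) 0) l ^ 2 + 2 * Derive (fun s => crd (gam s) 0) l * Derive (fun s => crd (gam s) 1) l + Derive (fun s => crd (gam s) 2) l ^ 2 + Derive (fun s => crd (gam s) 3) l ^ 2) / (2 * N l ^ 2) - m ^ 2 / 2)) by (field; auto).
      rewrite HLn. ring. }
    assert (Hm1 : D 0%nat / N l = piv) by (unfold D; rewrite <- (mom1 H m gam N l Hn); apply Hmom; auto).
    pose proof (alg H Y (fvf a a1 a2 bb mu c) c (N l) m piv _ (gam l) D Hn Hpiv HL HQ Hm1 eq_refl) as A.
    unfold Ups. unfold sum4 in A |- *. simpl in A |- *. unfold D in A. cbv beta in A. lra. }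
  change (I la = I lb).
  assert (Hin : forall x, Rmin la lb <= x <= Rmax la lb -> l1 < x < l2).
  { intros x Hx. unfold Rmin, Rmax in Hx. destruct (Rle_dec la lb); lra. }
  destruct (MVT_gen I la lb (fun _ => 0)) as [x [Hx E]].
  - intros x Hx. apply HD. apply Hin. lra.
  - intros x Hx. apply continuity_pt_filterlim.
    apply (@ex_derive_continuous R_AbsRing R_NormedModule).
    exists 0. apply HD. apply Hin. exact Hx.
  - lra.
Qed.
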